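(* Let $\mathsf{K}$ be one of the varieties $\mathsf{ISL}$, $\mathsf{bISL}$, $\mathsf{PDL}$, $\mathsf{IL}$, $\mathsf{HA}$ (defined in the context), and let $\boldsymbol{A} \in \mathsf{K}$. Then there exist a Heyting algebra $\boldsymbol{B}$ and an embedding of $\boldsymbol{A}$ into the reduct $\boldsymbol{B}^-$ of $\boldsymbol{B}$ to the language of $\mathsf{K}$, such that $\boldsymbol{B}^- \in \mathbb{U}(\boldsymbol{A})$, where $\mathbb{U}(\boldsymbol{A}) = \mathbb{I}\mathbb{S}\mathbb{P}_{u}(\boldsymbol{A})$ is the least universal class containing $\boldsymbol{A}$ (equivalently, $\boldsymbol{B}^-$ satisfies every universal first-order sentence true in $\boldsymbol{A}$).
   Context: A semilattice $\langle A;\land\rangle$ is ordered by $a \le b$ iff $a\land b = a$. The varieties are: $\mathsf{ISL}$ (implicative semilattices), algebras $\langle A;\land,\to,1\rangle$ where $\langle A;\land\rangle$ is a semilattice with maximum $1$ and $c\land a\le b \iff c \le a\to b$ for all $a,b,c$; $\mathsf{bISL}$ (bounded implicative semilattices), algebras $\langle A;\land,\to,0,1\rangle$ where $\langle A;\land,\to,1\rangle\in\mathsf{ISL}$ and $0$ is the minimum; $\mathsf{PDL}$ (pseudocomplemented distributive lattices), algebras $\langle A;\land,\lor,\lnot,0,1\rangle$ where $\langle A;\land,\lor\rangle$ is a distributive lattice with minimum $0$ and maximum $1$ and $c\land a = 0 \iff c\le \lnot a$; $\mathsf{IL}$ (implicative lattices), algebras $\langle A;\land,\lor,\to,1\rangle$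 that are lattices whose meet-semilattice reduct with $\to,1$ is in $\mathsf{ISL}$; $\mathsf{HA}$ (Heyting algebras), algebras $\langle A;\land,\lor,\to,0,1\rangle$ that are implicative lattices with minimum $0$. Each of these is the class of subreducts of Heyting algebras in the respective language. The universal class generated by a class of algebras is the class of all algebras satisfying all universal sentences it satisfies; it equals $\mathbb{I}\mathbb{S}\mathbb{P}_u$ of the class (isomorphic copies of subalgebras of ultraproducts). *)

(* Defs.v *)
(** An algebra of one of the smaller languages is represented by such a record
    whose fields outside that language are irrelevant (nothing below depends on
    them when working in that language). *)
Record alg : Type := Alg {
  car : Type;
  meet : car -> car -> car;
  join : car -> car -> car;
  imp  : car -> car -> car;
  neg  : car -> car;
  bot  : car;
  top  : car
}.

Inductive variety : Type := ISL | bISL | PDL | IL | HA.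

Definition has_meet (K : variety) : bool := true.
Definition has_top  (K : variety) : bool := true.
Definition has_join (K : variety) : bool :=
  match K with PDL | IL | HA => true | _ => false end.
Definition has_imp (K : variety) : bool :=
  match K with PDL => false | _ => true end.
Definition has_neg (K : variety) : bool :=
  match K with PDL => true | _ => false end.
Definition has_bot (K : variety) : bool :=
  match K with bISL | PDL | HA => true | _ => false end.

Section VarietyDefs.
Variable A : alg.
Local Notation "x ∧ y" := (meet A x y) (at level 40, left associativity).
Local Notation "x ∨ y" := (join A x y) (at level 50, left associativity).
Local Notation "x ⇒ y" := (imp A x y) (at level 55, right associativity).

Definition leA (a b : car A) : Prop := a ∧ b = a.

Definition is_semilattice : Prop :=
  (forall a b c, a ∧ (b ∧ c) = (a ∧ b) ∧ c) /\
  (forall a b, a ∧ b = b ∧ a) /\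
  (forall a, a ∧ a = a).

Definition is_lattice : Prop :=
  is_semilattice /\
  (forall a b c, a ∨ (b ∨ c) = (a ∨ b) ∨ c) /\
  (forall a b, a ∨ b = b ∨ a) /\
  (forall a, a ∨ a = a) /\
  (forall a b, a ∧ (a ∨ b) = a) /\
  (forall a b, a ∨ (a ∧ b) = a).

Definition is_distributive : Prop :=
  forall a b c, a ∧ (b ∨ c) = (a ∧ b) ∨ (a ∧ c).

Definition top_max : Prop := forall a, leA a (top A).
Definition bot_min : Prop := forall a, leA (bot A) a.

Definition residuated : Prop :=
  forall a b c, leA (c ∧ a) b <-> leA c (a ⇒ b).

Definition pseudocomplemented : Prop :=
  forall a c, c ∧ a = bot A <-> leA c (neg A a).

Definition is_ISL : Prop := is_semilattice /\ top_max /\ residuated.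
Definition is_bISL : Prop := is_ISL /\ bot_min.
Definition is_PDL : Prop :=
  is_lattice /\ is_distributive /\ bot_min /\ top_max /\ pseudocomplemented.
Definition is_IL : Prop := is_lattice /\ is_ISL.
Definition is_HA : Prop := is_IL /\ bot_min.
End VarietyDefs.

Definition in_variety (K : variety) (A : alg) : Prop :=
  match K with
  | ISL => is_ISL A
  | bISL => is_bISL A
  | PDL => is_PDL A
  | IL => is_IL A
  | HA => is_HA A
  end.

(** Heyting algebra: the HA axioms on <car; /\, \/, ->, 0, 1>
    (the [neg] field is irrelevant). *)
Definition heyting (B : alg) : Prop := is_HA B.

Definition reduct (B : alg) : alg :=
  Alg (car B) (meet B) (join B) (imp B) (fun x => imp B x (bot B)) (bot B) (top B).

Definition embedding (K : variety) (A C : alg) (f : car A -> car C) : Prop :=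
  (forall x y, f x = f y -> x = y) /\
  (forall x y, f (meet A x y) = meet C (f x) (f y)) /\
  f (top A) = top C /\
  (has_join K = true -> forall x y, f (join A x y) = join C (f x) (f y)) /\
  (has_imp K = true -> forall x y, f (imp A x y) = imp C (f x) (f y)) /\
  (has_neg K = true -> forall x, f (neg A x) = neg C (f x)) /\
  (has_bot K = true -> f (bot A) = bot C).

Inductive term : Type :=
  | TVar : nat -> term
  | TMeet : term -> term -> term
  | TJoin : term -> term -> term
  | TImp : term -> term -> term
  | TNeg : term -> term
  | TBot : term
  | TTop : term.

Fixpoint term_in (K : variety) (t : term) : bool :=
  match t with
  | TVar _ => true
  | TMeet s u => has_meet K && term_in K s && term_in K u
  | TJoin s u => has_join K && term_in K s && term_in K u
  | TImp s u => has_imp K && term_in K s && term_in K u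
  | TNeg s => has_neg K && term_in K s
  | TBot => has_bot K
  | TTop => has_top K
  end.

Fixpoint teval (A : alg) (v : nat -> car A) (t : term) : car A :=
  match t with
  | TVar n => v n
  | TMeet s u => meet A (teval A v s) (teval A v u)
  | TJoin s u => join A (teval A v s) (teval A v u)
  | TImp s u => imp A (teval A v s) (teval A v u)
  | TNeg s => neg A (teval A v s)
  | TBot => bot A
  | TTop => top A
  end.

Inductive qf : Type :=
  | FEq : term -> term -> qf
  | FNot : qf -> qf
  | FAnd : qf -> qf -> qf
  | FOr : qf -> qf -> qf.

Fixpoint qf_in (K : variety) (phi : qf) : bool :=
  match phi with
  | FEq s t => term_in K s && term_in K t
  | FNot p => qf_in K p
  | FAnd p q => qf_in K p && qf_in K q
  | FOr p q => qf_in K p && qf_in K q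
  end.

Fixpoint holds (A : alg) (v : nat -> car A) (phi : qf) : Prop :=
  match phi with
  | FEq s t => teval A v s = teval A v t
  | FNot p => ~ holds A v p
  | FAnd p q => holds A v p /\ holds A v q
  | FOr p q => holds A v p \/ holds A v q
  end.

(** A universal sentence of the language of K is the universal closure
    [forall x0 x1 ..., phi] of a quantifier-free formula phi of that language. *)
Definition sat_univ (A : alg) (phi : qf) : Prop :=
  forall v : nat -> car A, holds A v phi.

(** C ∈ U(A) (the universal class generated by A, in the language of K):
    C satisfies every universal K-sentence true in A. *)
Definition in_univ_class (K : variety) (A C : alg) : Prop :=
  forall phi : qf, qf_in K phi = true -> sat_univ A phi -> sat_univ C phi.

(* Main.v *)
Require Import Defs.
From Stdlib Require Import List Classical ClassicalEpsilon ProofIrrelevance FunctionalExtensionality PropExtensionality Lia.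
Import ListNotations.
From mathcomp Require filter classical_sets.

Module UFm.
Import mathcomp.classical.filter mathcomp.classical.classical_sets.

Lemma ultra_exists (I J : Type) (E : J -> I -> Prop)
  (fip : forall js : list J, exists i, forall j, List.In j js -> E j i) :
  exists U : (I -> Prop) -> Prop,
    (forall X Y : I -> Prop, (forall i, X i -> Y i) -> U X -> U Y) /\
    (forall X Y, U X -> U Y -> U (fun i => X i /\ Y i)) /\
    ~ U (fun _ => False) /\
    (forall X, U X \/ U (fun i => ~ X i)) /\
    (forall j, U (E j)).
Proof.
  pose (F := fun X : I -> Prop => exists js : list J, forall i, (forall j, List.In j js -> E j i) -> X i).
  assert (PF : ProperFilter F).
  { constructor.
    - intros [js Hjs]. destruct (fip js) as [i Hi]. exact (Hjs i Hi).
    - constructor.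
      + exists nil. intros; exact Logic.I.
      + intros P Q [js1 H1] [js2 H2]. exists (js1 ++ js2). intros i Hi. split.
        * apply H1. intros j Hj. apply Hi. apply in_or_app. left; exact Hj.
        * apply H2. intros j Hj. apply Hi. apply in_or_app. right; exact Hj.
      + intros P Q PQ [js H]. exists js. intros i Hi. apply PQ. apply H, Hi. }
  destruct (ultraFilterLemma PF) as [G [UG FG]].
  exists G. split; [|split; [|split; [|split]]].
  - intros X Y XY GX. apply (@filterS I G _ X Y); [exact XY | exact GX].
  - intros X Y GX GY. exact (@filterI I G _ X Y GX GY).
  - intro H. apply (@filter_not_empty I G _). exact H.
  - intro X. exact (in_ultra_setVsetC X UG).
  - intro j. apply FG. exists [j]. intros i Hi. apply Hi. left; reflexivity.
Qed.
End UFm.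

Lemma sig_ext {T} {P : T -> Prop} (a b : {x | P x}) : proj1_sig a = proj1_sig b -> a = b.
Proof.
  destruct a as [a pa], b as [b pb]; simpl; intros ->. f_equal. apply proof_irrelevance.
Qed.

Lemma emb_teval K C A g (Hg : embedding K C A g) t w :
  term_in K t = true -> g (teval C w t) = teval A (fun n => g (w n)) t.
Proof.
  destruct Hg as (Hinj & Hm & Ht & Hj & Hi & Hn & Hb).
  induction t; simpl; intros Ht'; try reflexivity;
  repeat (match goal with h : (_ && _)%bool = true |- _ => apply andb_prop in h; destruct h end).
  - rewrite Hm, IHt1, IHt2 by assumption; reflexivity.
  - rewrite Hj, IHt1, IHt2 by assumption; reflexivity.
  - rewrite Hi, IHt1, IHt2 by assumption; reflexivity.
  - rewrite Hn, IHt by assumption; reflexivity.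
  - rewrite Hb by assumption; reflexivity.
  - exact Ht.
Qed.

Lemma emb_holds K C A g (Hg : embedding K C A g) phi w :
  qf_in K phi = true -> (holds C w phi <-> holds A (fun n => g (w n)) phi).
Proof.
  induction phi; simpl; intros Hq.
  - apply andb_prop in Hq as [H1 H2].
    rewrite <- !(emb_teval K C A g Hg) by assumption.
    split; [intros ->; reflexivity|]. apply (proj1 Hg).
  - rewrite IHphi by assumption; tauto.
  - apply andb_prop in Hq as [H1 H2]. rewrite IHphi1, IHphi2 by assumption; tauto.
  - apply andb_prop in Hq as [H1 H2]. rewrite IHphi1, IHphi2 by assumption; tauto.
Qed.

Section Ultra.
Variable I : Type.
Variable U : (I -> Prop) -> Prop.
Hypothesis Uup : forall X Y : I -> Prop, (forall i, X i -> Y i) -> U X -> U Y.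
Hypothesis Ucap : forall X Y, U X -> U Y -> U (fun i => X i /\ Y i).
Hypothesis Unot0 : ~ U (fun _ => False).
Hypothesis Uult : forall X, U X \/ U (fun i => ~ X i).

Lemma UT : U (fun _ => True).
Proof. destruct (Uult (fun _ => True)) as [h|h]; [exact h|]. apply (Uup _ _ (fun i _ => Logic.I) h). Qed.

Lemma Uex X : U X -> exists i, X i.
Proof.
  intros h. apply NNPP. intros hn. apply Unot0. apply (Uup X); [|exact h].
  intros i xi. apply hn. exists i; exact xi.
Qed.

Lemma Uor X Y : U (fun i => X i \/ Y i) <-> U X \/ U Y.
Proof.
  split.
  - intros h. destruct (Uult X) as [hx|hx]; [left; exact hx|].
    destruct (Uult Y) as [hy|hy]; [right; exact hy|].
    exfalso. apply Unot0. refine (Uup _ _ _ (Ucap _ _ (Ucap _ _ h hx) hy)).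
    intros i [[[a|a] b] c]; tauto.
  - intros [h|h]; refine (Uup _ _ _ h); tauto.
Qed.

Lemma Unot X : U (fun i => ~ X i) <-> ~ U X.
Proof.
  split.
  - intros h hx. apply Unot0. refine (Uup _ _ _ (Ucap _ _ h hx)). intros i [a b]; tauto.
  - intros h. destruct (Uult X); tauto.
Qed.

Lemma Uand X Y : U (fun i => X i /\ Y i) <-> U X /\ U Y.
Proof.
  split.
  - intros h; split; refine (Uup _ _ _ h); tauto.
  - intros [a b]; apply Ucap; assumption.
Qed.

Variable H : I -> alg.

Definition prodH := forall i, car (H i).
Definition equ (h k : prodH) : Prop := U (fun i => h i = k i).

Lemma equ_refl h : equ h h.
Proof. apply (Uup _ _ (fun i _ => eq_refl) UT). Qed.
Lemma equ_sym h k : equ h k -> equ k h.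
Proof. apply Uup; intros; symmetry; assumption. Qed.
Lemma equ_trans h k l : equ h k -> equ k l -> equ h l.
Proof. intros a b. refine (Uup _ _ _ (Ucap _ _ a b)). intros i [x y]; congruence. Qed.

Definition Q := { P : prodH -> Prop | exists h, P = equ h }.
Definition mk (h : prodH) : Q := exist _ (equ h) (ex_intro _ h eq_refl).
Definition rep (q : Q) : prodH := proj1_sig (constructive_indefinite_description _ (proj2_sig q)).
Lemma rep_spec q : proj1_sig q = equ (rep q).
Proof. unfold rep. destruct (constructive_indefinite_description _ _); simpl; assumption. Qed.

Lemma mk_eq h k : equ h k -> mk h = mk k.
Proof.
  intros e. apply sig_ext; simpl. apply functional_extensionality; intro l.
  apply propositional_extensionality; split; intro x.
  - exact (equ_trans _ _ _ (equ_sym _ _ e) x).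
  - exact (equ_trans _ _ _ e x).
Qed.

Lemma eq_mk h k : mk h = mk k -> equ h k.
Proof.
  intros e. apply (f_equal (@proj1_sig _ _)) in e. simpl in e.
  rewrite e. apply equ_refl.
Qed.

Lemma mk_rep q : mk (rep q) = q.
Proof. apply sig_ext; simpl. symmetry; apply rep_spec. Qed.

Lemma rep_mk h : equ (rep (mk h)) h.
Proof. apply eq_mk. rewrite mk_rep. reflexivity. Qed.

Definition lift2 (op : forall i, car (H i) -> car (H i) -> car (H i)) (q r : Q) : Q :=
  mk (fun i => op i (rep q i) (rep r i)).

Lemma lift2_mk op h k : lift2 op (mk h) (mk k) = mk (fun i => op i (h i) (k i)).
Proof.
  apply mk_eq. unfold equ.
  refine (Uup _ _ _ (Ucap _ _ (rep_mk h) (rep_mk k))). intros i [a b]. rewrite a, b; reflexivity.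
Qed.

Definition botB : Q := mk (fun i => bot (H i)).
Definition topB : Q := mk (fun i => top (H i)).
Definition impB := lift2 (fun i => imp (H i)).
Definition UB : alg :=
  Alg Q (lift2 (fun i => meet (H i))) (lift2 (fun i => join (H i))) impB
      (fun q => impB q botB) botB topB.

Definition vi (v : nat -> Q) (i : I) : nat -> car (reduct (H i)) := fun n => rep (v n) i.

Lemma los_teval v t : teval UB v t = mk (fun i => teval (reduct (H i)) (vi v i) t).
Proof.
  induction t; simpl.
  - symmetry; apply mk_rep.
  - rewrite IHt1, IHt2. apply lift2_mk.
  - rewrite IHt1, IHt2. apply lift2_mk.
  - unfold impB. rewrite IHt1, IHt2. apply lift2_mk.
  - unfold impB, botB. rewrite IHt. apply lift2_mk.
  - reflexivity.
  - reflexivity.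
Qed.

Lemma los_holds v phi : holds UB v phi <-> U (fun i => holds (reduct (H i)) (vi v i) phi).
Proof.
  induction phi; simpl.
  - rewrite !los_teval. split; [apply eq_mk | apply mk_eq].
  - rewrite IHphi. rewrite Unot. tauto.
  - rewrite IHphi1, IHphi2, Uand. tauto.
  - rewrite IHphi1, IHphi2, Uor. tauto.
Qed.

Lemma los_univ phi : (forall i w, holds (reduct (H i)) w phi) -> forall v, holds UB v phi.
Proof.
  intros h v. apply los_holds. apply (Uup _ _ (fun i _ => h i _) UT).
Qed.

End Ultra.

Definition tx := TVar 0.
Definition ty := TVar 1.
Definition tz := TVar 2.
Definition FImpl (p q : qf) := FOr (FNot p) q.
Definition HAax : qf :=
  FAnd (FEq (TMeet tx (TMeet ty tz)) (TMeet (TMeet tx ty) tz))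
 (FAnd (FEq (TMeet tx ty) (TMeet ty tx))
 (FAnd (FEq (TMeet tx tx) tx)
 (FAnd (FEq (TJoin tx (TJoin ty tz)) (TJoin (TJoin tx ty) tz))
 (FAnd (FEq (TJoin tx ty) (TJoin ty tx))
 (FAnd (FEq (TJoin tx tx) tx)
 (FAnd (FEq (TMeet tx (TJoin tx ty)) tx)
 (FAnd (FEq (TJoin tx (TMeet tx ty)) tx)
 (FAnd (FEq (TMeet tx TTop) tx)
 (FAnd (FImpl (FEq (TMeet (TMeet tz tx) ty) (TMeet tz tx)) (FEq (TMeet tz (TImp tx ty)) tz))
 (FAnd (FImpl (FEq (TMeet tz (TImp tx ty)) tz) (FEq (TMeet (TMeet tz tx) ty) (TMeet tz tx)))
       (FEq (TMeet TBot tx) TBot))))))))))).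

Lemma heyting_HAax C : heyting C -> forall w, holds (reduct C) w HAax.
Proof.
  intros [[[[Sa [Sc Si]] [Ja [Jc [Ji [Ab1 Ab2]]]]] [_ [Tm Re]]] Bm] w.
  unfold top_max, bot_min, residuated, leA in *.
  simpl. repeat split; auto.
  - destruct (classic ((meet C (meet C (w 2) (w 0)) (w 1)) = meet C (w 2) (w 0))) as [h|h]; [right|left; exact h].
    apply Re; exact h.
  - destruct (classic (meet C (w 2) (imp C (w 0) (w 1)) = w 2)) as [h|h]; [right|left; exact h].
    apply Re; exact h.
Qed.

Definition v3 {T} (a b c : T) : nat -> T := fun n => match n with 0 => a | 1 => b | _ => c end.

Lemma HAax_heyting C : (forall v, holds C v HAax) -> heyting C.
Proof.
  intros h.
  assert (G : forall a b c, holds C (v3 a b c) HAax) by (intros; apply h).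
  unfold heyting, is_HA, is_IL, is_lattice, is_ISL, is_semilattice, top_max, bot_min, residuated, leA.
  assert (Sem : (forall a b c : car C, meet C a (meet C b c) = meet C (meet C a b) c) /\ (forall a b : car C, meet C a b = meet C b a) /\ (forall a : car C, meet C a a = a)).
  { split; [|split]; intros; [apply (G a b c)|apply (G a b a)|apply (G a a a)]. }
  split; [split; [split; [exact Sem|]|split; [exact Sem|split]]|].
  - split; [|split; [|split; [|split]]]; intros.
    + apply (G a b c).
    + apply (G a b a).
    + apply (G a a a).
    + apply (G a b a).
    + apply (G a b a).
  - intros a. apply (G a a a).
  - intros a b c. destruct (G a b c) as (_&_&_&_&_&_&_&_&_&R1&R2&_). simpl in R1, R2.
    split; intro e; [destruct R1 as [R1|R1]|destruct R2 as [R2|R2]]; tauto.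
  - intros a. apply (G a a a).
Qed.

Section UltraMain.
Variable I : Type.
Variable U : (I -> Prop) -> Prop.
Hypothesis Uup : forall X Y : I -> Prop, (forall i, X i -> Y i) -> U X -> U Y.
Hypothesis Ucap : forall X Y, U X -> U Y -> U (fun i => X i /\ Y i).
Hypothesis Unot0 : ~ U (fun _ => False).
Hypothesis Uult : forall X, U X \/ U (fun i => ~ X i).
Variable K : variety.
Variable A : alg.
Variable H : I -> alg.
Hypothesis hH : forall i, heyting (H i).
Variable val : forall i, car (H i) -> car A.
Hypothesis emb : forall i, embedding K (reduct (H i)) A (val i).
Hypothesis cov : forall x, U (fun i => exists y, val i y = x).

Let B := UB I U H.
Let mkB := mk I U H.
Let repB := rep I U H.

Lemma sec_ex i x : exists y : car (H i), (exists y', val i y' = x) -> val i y = x.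
Proof.
  destruct (classic (exists y', val i y' = x)) as [[y' e]|n].
  - exists y'; intros _; exact e.
  - exists (top (H i)); intros e; contradiction.
Qed.
Definition sec i x : car (H i) := proj1_sig (constructive_indefinite_description _ (sec_ex i x)).
Lemma sec_spec i x : (exists y', val i y' = x) -> val i (sec i x) = x.
Proof. unfold sec; destruct (constructive_indefinite_description _ _); simpl; assumption. Qed.

Definition fB (x : car A) : car B := mk I U H (fun i => sec i x).

Lemma Ucov2 x y : U (fun i => val i (sec i x) = x /\ val i (sec i y) = y).
Proof.
  apply Ucap; (refine (Uup _ _ _ (cov _)); intros i e; apply sec_spec, e).
Qed.
Lemma Ucov1 x : U (fun i => val i (sec i x) = x).
Proof. refine (Uup _ _ _ (cov _)); intros i e; apply sec_spec, e. Qed.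

Lemma lift2_mk' op h k :
  lift2 I U H op (mk I U H h) (mk I U H k) = mk I U H (fun i => op i (h i) (k i)).
Proof. apply lift2_mk; assumption. Qed.

Lemma mk_eq' h k : equ I U H h k -> mk I U H h = mk I U H k.
Proof. apply mk_eq; assumption. Qed.

Lemma op_pres (op : forall i, car (H i) -> car (H i) -> car (H i)) (opA : car A -> car A -> car A)
  (hop : forall i a b, val i (op i a b) = opA (val i a) (val i b)) x y :
  fB (opA x y) = lift2 I U H op (fB x) (fB y).
Proof.
  unfold fB. rewrite lift2_mk'. apply mk_eq'. unfold equ.
  refine (Uup _ _ _ (Ucap _ _ (Ucov2 x y) (Ucov1 (opA x y)))).
  intros i [[e1 e2] e3]. apply (proj1 (emb i)). simpl. rewrite e3, hop, e1, e2. reflexivity.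
Qed.

Theorem ultra_main :
  exists (B : alg) (f : car A -> car (reduct B)),
    heyting B /\ embedding K A (reduct B) f /\ in_univ_class K A (reduct B).
Proof.
  exists B, fB. split; [|split].
  - apply HAax_heyting. apply los_univ; try assumption.
    intros i w. apply heyting_HAax. exact (hH i).
  - repeat split.
    + intros x y e. unfold fB in e. apply eq_mk in e; try assumption. unfold equ in e.
      destruct (Uex I U Uup Unot0 _ (Ucap _ _ e (Ucov2 x y))) as [i [e1 [e2 e3]]].
      rewrite <- e2, <- e3, e1. reflexivity.
    + intros x y. apply op_pres. intros i a b. apply (emb i).
    + unfold fB; simpl. unfold topB. apply mk_eq'. unfold equ.
      refine (Uup _ _ _ (Ucov1 (top A))). intros i e. apply (proj1 (emb i)).
      rewrite e. symmetry. apply (emb i).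
    + intros hk x y. apply op_pres. intros i a b. apply (emb i), hk.
    + intros hk x y. apply op_pres. intros i a b. apply (emb i), hk.
    + intros hk x. simpl. unfold impB, botB, fB. rewrite lift2_mk'. apply mk_eq'. unfold equ.
      refine (Uup _ _ _ (Ucov2 x (neg A x))). intros i [e1 e2]. apply (proj1 (emb i)).
      rewrite e2. simpl. pose proof (proj1 (proj2 (proj2 (proj2 (proj2 (proj2 (emb i)))))) hk (sec i x)) as e.
      simpl in e. rewrite e, e1. reflexivity.
    + intros hk. unfold fB; simpl. unfold botB. apply mk_eq'. unfold equ.
      refine (Uup _ _ _ (Ucov1 (bot A))). intros i e. apply (proj1 (emb i)).
      rewrite e. symmetry. apply (emb i), hk.
  - intros phi hq hA v. apply los_holds; try assumption.
    refine (Uup _ _ _ (UT I U Uup Uult)). intros i _.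
    apply (emb_holds K (reduct (H i)) A (val i) (emb i) phi _ hq). apply hA.
Qed.
End UltraMain.

Section Order.
Variable A : alg.
Hypothesis Hsl : is_semilattice A.
Notation "x ∧ y" := (meet A x y) (at level 40, left associativity).
Notation le := (leA A).

Lemma mA x y z : x ∧ (y ∧ z) = (x ∧ y) ∧ z. Proof. apply Hsl. Qed.
Lemma mC x y : x ∧ y = y ∧ x. Proof. apply Hsl. Qed.
Lemma mI x : x ∧ x = x. Proof. apply Hsl. Qed.

Lemma le_refl x : le x x. Proof. apply mI. Qed.
Lemma le_antisym x y : le x y -> le y x -> x = y.
Proof. unfold leA; intros a b. transitivity (x ∧ y); [symmetry; exact a|]. rewrite mC; exact b. Qed.
Lemma le_trans x y z : le x y -> le y z -> le x z.
Proof. unfold leA; intros a b. rewrite <- a. rewrite <- mA, b. reflexivity. Qed.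
Lemma meet_lb1 x y : le (x ∧ y) x.
Proof. unfold leA. rewrite (mC x y), <- mA, mI. reflexivity. Qed.
Lemma meet_lb2 x y : le (x ∧ y) y.
Proof. unfold leA. rewrite <- mA, mI. reflexivity. Qed.
Lemma meet_glb x y z : le z x -> le z y -> le z (x ∧ y).
Proof. unfold leA; intros a b. rewrite mA, a, b. reflexivity. Qed.
Lemma le_meet_iff x y z : le z (x ∧ y) <-> le z x /\ le z y.
Proof.
  split; [intros h; split; eapply le_trans; [exact h|apply meet_lb1|exact h|apply meet_lb2]|].
  intros [a b]; apply meet_glb; assumption.
Qed.
Lemma meet_mono x y x' y' : le x x' -> le y y' -> le (x ∧ y) (x' ∧ y').
Proof.
  intros a b. apply meet_glb; [eapply le_trans; [apply meet_lb1|exact a]|eapply le_trans; [apply meet_lb2|exact b]].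
Qed.
End Order.

Section SubHA.
Variable A : alg.
Hypothesis Hsl : is_semilattice A.
Hypothesis Htm : top_max A.
Variable D : car A -> Prop.
Variables (jn im : car A -> car A -> car A) (b : car A).
Hypothesis Dt : D (top A).
Hypothesis Dm : forall x y, D x -> D y -> D (meet A x y).
Hypothesis Dj : forall x y, D x -> D y -> D (jn x y).
Hypothesis Di : forall x y, D x -> D y -> D (im x y).
Hypothesis Db : D b.
Hypothesis Hlub : forall x y z, D x -> D y -> D z -> (leA A (jn x y) z <-> leA A x z /\ leA A y z).
Hypothesis Hres : forall a c d, D a -> D c -> D d -> (leA A (meet A c a) d <-> leA A c (im a d)).
Hypothesis Hbot : forall x, D x -> leA A b x.

Definition ST := {x | D x}.
Definition smeet (x y : ST) : ST := exist _ _ (Dm _ _ (proj2_sig x) (proj2_sig y)).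
Definition sjoin (x y : ST) : ST := exist _ _ (Dj _ _ (proj2_sig x) (proj2_sig y)).
Definition simp (x y : ST) : ST := exist _ _ (Di _ _ (proj2_sig x) (proj2_sig y)).
Definition sbot : ST := exist _ _ Db.
Definition stop : ST := exist _ _ Dt.
Definition SubH : alg := Alg ST smeet sjoin simp (fun x => simp x sbot) sbot stop.

Lemma leS (x y : ST) : leA SubH x y <-> leA A (proj1_sig x) (proj1_sig y).
Proof.
  unfold leA; split; intro e.
  - apply (f_equal (@proj1_sig _ _)) in e. exact e.
  - apply sig_ext. exact e.
Qed.

Lemma S_antisym (x y : ST) : leA A (proj1_sig x) (proj1_sig y) -> leA A (proj1_sig y) (proj1_sig x) -> x = y.
Proof. intros; apply sig_ext, (le_antisym A Hsl); assumption. Qed.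

Lemma jub1 x y : D x -> D y -> leA A x (jn x y).
Proof. intros. apply (Hlub x y (jn x y)); auto. apply le_refl, Hsl. Qed.
Lemma jub2 x y : D x -> D y -> leA A y (jn x y).
Proof. intros. apply (Hlub x y (jn x y)); auto. apply le_refl, Hsl. Qed.

Lemma SubH_heyting : heyting SubH.
Proof.
  assert (Sem : is_semilattice SubH).
  { split; [|split]; intros; apply sig_ext; simpl; apply Hsl. }
  split; [split; [split; [exact Sem|]|split; [exact Sem|split]]|].
  - split; [|split; [|split; [|split]]].
    + intros [x px] [y py] [z pz]. apply S_antisym; simpl.
      * apply Hlub; auto. split; [eapply le_trans; [exact Hsl| apply (jub1 x y)|apply jub1]; auto|].
        apply Hlub; auto. split; [eapply le_trans; [exact Hsl| apply (jub2 x y)|apply jub1]; auto|apply jub2; auto].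
      * apply Hlub; auto. split; [|eapply le_trans; [exact Hsl| apply (jub2 y z)|apply jub2]; auto].
        apply Hlub; auto. split; [apply jub1; auto|eapply le_trans; [exact Hsl| apply (jub1 y z)|apply jub2]; auto].
    + intros [x px] [y py]. apply S_antisym; simpl; apply Hlub; auto; split; first [apply jub1 | apply jub2]; auto.
    + intros [x px]. apply S_antisym; simpl. apply Hlub; auto; split; apply le_refl, Hsl. apply jub1; auto.
    + intros [x px] [y py]. apply sig_ext; simpl. apply jub1; auto.
    + intros [x px] [y py]. apply S_antisym; simpl.
      * apply Hlub; auto. split; [apply le_refl, Hsl|apply meet_lb1, Hsl].
      * apply jub1; auto.
  - intros [x px]. apply sig_ext; simpl. apply Htm.
  - intros [a pa] [d pd] [c pc]. rewrite !leS. simpl. apply Hres; auto.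
  - intros [x px]. apply leS; simpl. apply Hbot; auto.
Qed.

End SubHA.

Section LatLemmas.
Variable A : alg.
Hypothesis Hl : is_lattice A.
Notation le := (leA A).

Lemma lat_sl : is_semilattice A. Proof. apply Hl. Qed.

Lemma le_join x z : le x z -> join A x z = z.
Proof.
  destruct Hl as [Hsl [Ja [Jc [Ji [Ab1 Ab2]]]]]. unfold leA. intros e.
  rewrite <- e. rewrite Jc. rewrite (mC A Hsl). apply Ab2.
Qed.
Lemma join_le x z : join A x z = z -> le x z.
Proof.
  destruct Hl as [Hsl [Ja [Jc [Ji [Ab1 Ab2]]]]]. unfold leA. intros e.
  rewrite <- e. apply Ab1.
Qed.
Lemma lat_lub x y z : le (join A x y) z <-> le x z /\ le y z.
Proof.
  pose proof lat_sl as Hsl.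
  destruct Hl as [_ [Ja [Jc [Ji [Ab1 Ab2]]]]].
  split.
  - intros h. split; eapply le_trans; try exact Hsl; try exact h.
    + apply Ab1.
    + rewrite Jc. apply Ab1.
  - intros [a b]. apply join_le. rewrite <- Ja. rewrite (le_join y z b). apply le_join; exact a.
Qed.
End LatLemmas.

Section MeetL.
Variable A : alg.
Hypothesis Hsl : is_semilattice A.
Hypothesis Htm : top_max A.
Notation le := (leA A).
Definition meetl (l : list (car A)) : car A := fold_right (meet A) (top A) l.

Lemma meetl_le l x : In x l -> le (meetl l) x.
Proof.
  induction l as [|a l IH]; simpl; [tauto|]. intros [<-|h].
  - apply meet_lb1, Hsl.
  - eapply le_trans; [exact Hsl|apply meet_lb2, Hsl|apply IH, h].
Qed.
Lemma le_meetl l c : (forall x, In x l -> le c x) -> le c (meetl l).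
Proof.
  induction l as [|a l IH]; simpl; intros h.
  - apply Htm.
  - apply meet_glb; [exact Hsl|apply h; left; reflexivity|apply IH; intros; apply h; right; assumption].
Qed.
Lemma meetl_app l1 l2 : meetl (l1 ++ l2) = meet A (meetl l1) (meetl l2).
Proof.
  induction l1 as [|a l IH]; simpl.
  - rewrite (mC A Hsl). symmetry. apply Htm.
  - rewrite IH. apply (mA A Hsl).
Qed.
Lemma meetl_incl l1 l2 : (forall x, In x l1 -> In x l2) -> le (meetl l2) (meetl l1).
Proof. intros h. apply le_meetl. intros x hx. apply meetl_le, h, hx. Qed.
Lemma meetl_same l1 l2 : (forall x, In x l1 <-> In x l2) -> meetl l1 = meetl l2.
Proof. intros h. apply (le_antisym A Hsl); apply meetl_incl; intros; apply h; assumption. Qed.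
End MeetL.

Section ILinst.
Variable A : alg.
Hypothesis HIL : is_IL A.

Let Hl : is_lattice A := proj1 HIL.
Let Hsl : is_semilattice A := proj1 Hl.
Let Htm : top_max A := proj1 (proj2 (proj2 HIL)).
Let Hres : residuated A := proj2 (proj2 (proj2 HIL)).

Lemma isl_le_imp (C : alg) (hs : is_semilattice C) (hr : residuated C) x y : leA C y (imp C x y).
Proof. apply hr. apply meet_lb1, hs. Qed.

Definition ILH (F : list (car A)) : alg :=
  SubH A (fun x => leA A (meetl A F) x) (join A) (imp A) (meetl A F)
    (Htm _)
    (fun x y hx hy => meet_glb A Hsl _ _ _ hx hy)
    (fun x y hx _ => le_trans A Hsl _ _ _ hx (proj1 (proj1 (lat_lub A Hl x y (join A x y)) (le_refl A Hsl _))))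
    (fun x y _ hy => le_trans A Hsl _ _ _ hy (isl_le_imp A Hsl Hres x y))
    (le_refl A Hsl _).

Lemma ILH_heyting F : heyting (ILH F).
Proof.
  apply SubH_heyting; try assumption.
  - intros; apply lat_lub; assumption.
  - intros; apply Hres.
  - intros; assumption.
Qed.

Lemma ILH_emb F : embedding IL (reduct (ILH F)) A (@proj1_sig _ _).
Proof.
  repeat split; try discriminate.
  intros x y e; apply sig_ext; exact e.
Qed.

Lemma ILH_cov x F : In x F -> exists y : car (ILH F), proj1_sig y = x.
Proof. intros h. exists (exist _ x (meetl_le A Hsl F x h)). reflexivity. Qed.
End ILinst.

Fixpoint sublists {T} (l : list T) : list (list T) :=
  match l with
  | [] => [[]]
  | a :: l' => map (cons a) (sublists l') ++ sublists l'
  end.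

Lemma filter_sublists {T} (f : T -> bool) l : In (filter f l) (sublists l).
Proof.
  induction l as [|a l IH]; simpl; [left; reflexivity|].
  destruct (f a); apply in_or_app; [left; apply in_map; exact IH|right; exact IH].
Qed.

Definition bdec (P : Prop) : bool := if excluded_middle_informative P then true else false.
Lemma bdec_iff P : bdec P = true <-> P.
Proof. unfold bdec; destruct (excluded_middle_informative P); split; intros; auto; discriminate. Qed.

Lemma collect {T V} (l : list T) (R : T -> V -> Prop) :
  (forall p, In p l -> exists W, forall w, R p w -> In w W) ->
  exists W, forall p w, In p l -> R p w -> In w W.
Proof.
  induction l as [|a l IH]; intros h.
  - exists []; intros p w [].
  - destruct (h a (or_introl eq_refl)) as [Wa Ha].
    destruct IH as [W HW]; [intros; apply h; right; assumption|].
    exists (Wa ++ W). intros p w [<-|hp] r; apply in_or_app; [left; apply Ha, r|right; eapply HW; eassumption].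
Qed.

(* ---------- ISL local finiteness ---------- *)
Section ISLfin.
Variable A : alg.
Hypothesis HI : is_ISL A.
Let Hsl : is_semilattice A := proj1 HI.
Let Htm : top_max A := proj1 (proj2 HI).
Let Hres : residuated A := proj2 (proj2 HI).
Notation "x ∧ y" := (meet A x y) (at level 40, left associativity).
Notation "x ⇒ y" := (imp A x y) (at level 55, right associativity).
Notation le := (leA A).
Notation T := (top A).

Lemma ltr x y z : le x y -> le y z -> le x z. Proof. apply le_trans, Hsl. Qed.
Lemma lrf x : le x x. Proof. apply le_refl, Hsl. Qed.
Lemma lb1 x y : le (x ∧ y) x. Proof. apply meet_lb1, Hsl. Qed.
Lemma lb2 x y : le (x ∧ y) y. Proof. apply meet_lb2, Hsl. Qed.
Lemma glb x y z : le z x -> le z y -> le z (x ∧ y). Proof. apply meet_glb, Hsl. Qed.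
Lemma asy x y : le x y -> le y x -> x = y. Proof. apply le_antisym, Hsl. Qed.
Lemma mmono x y x' y' : le x x' -> le y y' -> le (x ∧ y) (x' ∧ y'). Proof. apply meet_mono, Hsl. Qed.
Lemma ltop x : le x T. Proof. apply Htm. Qed.

Lemma resL c a b : le (c ∧ a) b -> le c (a ⇒ b). Proof. apply Hres. Qed.
Lemma resR c a b : le c (a ⇒ b) -> le (c ∧ a) b. Proof. apply Hres. Qed.
Lemma mp a b : le (a ∧ (a ⇒ b)) b.
Proof. eapply ltr; [|apply resR, lrf]. rewrite (mC A Hsl). apply lrf. Qed.
Lemma le_imp a b : le b (a ⇒ b). Proof. apply resL, lb1. Qed.
Lemma imp_mono a b b' : le b b' -> le (a ⇒ b) (a ⇒ b').
Proof. intros h. apply resL. eapply ltr; [|exact h]. rewrite (mC A Hsl). apply mp. Qed.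
Lemma imp_anti a a' b : le a' a -> le (a ⇒ b) (a' ⇒ b).
Proof.
  intros h. apply resL. eapply ltr; [|apply (mp a b)]. rewrite (mC A Hsl). apply mmono; [exact h|apply lrf].
Qed.
Lemma curry a b c : (a ∧ b) ⇒ c = a ⇒ (b ⇒ c).
Proof.
  apply asy.
  - apply resL, resL. rewrite <- (mA A Hsl). rewrite (mC A Hsl). apply mp.
  - apply resL. rewrite (mA A Hsl). apply resR, resR, lrf.
Qed.
Lemma imp_meet a b c : a ⇒ (b ∧ c) = (a ⇒ b) ∧ (a ⇒ c).
Proof.
  apply asy.
  - apply glb; apply imp_mono; [apply lb1|apply lb2].
  - apply resL. apply glb.
    + eapply ltr; [|apply (mp a b)]. rewrite (mC A Hsl). apply mmono; [apply lrf|apply lb1].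
    + eapply ltr; [|apply (mp a c)]. rewrite (mC A Hsl). apply mmono; [apply lrf|apply lb2].
Qed.
Lemma imp_top a : a ⇒ T = T.
Proof. apply asy; [apply ltop|apply le_imp]. Qed.
Lemma imp_self a : a ⇒ a = T.
Proof. apply asy; [apply ltop|apply resL, lb2]. Qed.
Lemma top_imp a : T ⇒ a = a.
Proof.
  apply asy.
  - eapply ltr; [|apply (mp T a)]. apply glb; [apply ltop|apply lrf].
  - apply le_imp.
Qed.
Lemma phi_imp p x y : p ⇒ (x ⇒ y) = (p ⇒ x) ⇒ (p ⇒ y).
Proof.
  apply asy.
  - apply resL, resL. eapply ltr; [|apply (mp x y)]. apply glb.
    + eapply ltr; [|apply (mp p x)]. apply glb; [apply lb2 | eapply ltr; [apply lb1| apply lb2]].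
    + eapply ltr; [|apply (mp p (x ⇒ y))]. apply glb; [apply lb2| eapply ltr; [apply lb1|apply lb1]].
  - apply resL, resL.
    eapply ltr; [|apply (mp p y)]. apply glb.
    + eapply ltr; [apply lb1|apply lb2].
    + eapply ltr; [|apply (mp (p ⇒ x))]. apply glb.
      * eapply ltr; [apply lb2|apply le_imp].
      * eapply ltr; [apply lb1|apply lb1].
Qed.

Notation ml := (meetl A).
Lemma imp_meetl a l : a ⇒ ml l = ml (map (imp A a) l).
Proof.
  induction l as [|b l IH]; simpl; [apply imp_top|]. rewrite imp_meet, IH. reflexivity.
Qed.

Inductive SG (G : list (car A)) : car A -> Prop :=
| SG_gen g : In g G -> SG G g
| SG_top : SG G T
| SG_meet x y : SG G x -> SG G y -> SG G (x ∧ y)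
| SG_imp x y : SG G x -> SG G y -> SG G (x ⇒ y).

Lemma SG_meetl G l : (forall x, In x l -> SG G x) -> SG G (ml l).
Proof.
  induction l as [|a l IH]; simpl; intros h; [apply SG_top|].
  apply SG_meet; [apply h; left; reflexivity|apply IH; intros; apply h; right; assumption].
Qed.

Lemma SG_bot G x : SG G x -> le (ml G) x.
Proof.
  induction 1.
  - apply meetl_le; [exact Hsl|exact H].
  - apply ltop.
  - apply glb; assumption.
  - eapply ltr; [exact IHSG2|apply le_imp].
Qed.

Lemma SG_nf G x : SG G x -> exists X, x = ml X /\
  forall w, In w X -> exists u p, SG G u /\ In p G /\ w = u ⇒ p.
Proof.
  induction 1.
  - exists [T ⇒ g]. split.
    + simpl. rewrite top_imp. symmetry. apply Htm.
    + intros w [<-|[]]. exists T, g. repeat split; [apply SG_top|exact H].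
  - exists []. split; [reflexivity|intros w []].
  - destruct IHSG1 as [X [-> HX]], IHSG2 as [Y [-> HY]].
    exists (X ++ Y). split; [symmetry; apply meetl_app; [exact Hsl|exact Htm]|].
    intros w hw. apply in_app_or in hw as [hw|hw]; [apply HX|apply HY]; exact hw.
  - destruct IHSG2 as [Y [-> HY]].
    exists (map (imp A x) Y). split; [apply imp_meetl|].
    intros w hw. apply in_map_iff in hw as [w' [<- hw']].
    destruct (HY w' hw') as [u [p [hu [hp ->]]]].
    exists (x ∧ u), p. repeat split; [apply SG_meet; assumption|exact hp|].
    symmetry; apply curry.
Qed.

(* minterms relative to p *)
Fixpoint mts (p : car A) (L : list (car A)) : list (car A) :=
  match L with
  | [] => [T]
  | l :: L' => map (meet A l) (mts p L') ++ map (meet A (l ⇒ p)) (mts p L')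
  end.

Lemma mts_lit p L m : In m (mts p L) -> forall l, In l L -> le m l \/ le m (l ⇒ p).
Proof.
  revert m. induction L as [|a L IH]; simpl; intros m hm l hl; [contradiction|].
  apply in_app_or in hm as [hm|hm]; apply in_map_iff in hm as [m' [<- hm']].
  - destruct hl as [<-|hl]; [left; apply lb1|].
    destruct (IH m' hm' l hl) as [h|h]; [left|right]; eapply ltr; [apply lb2|exact h| apply lb2|exact h].
  - destruct hl as [<-|hl]; [right; apply lb1|].
    destruct (IH m' hm' l hl) as [h|h]; [left|right]; eapply ltr; [apply lb2|exact h| apply lb2|exact h].
Qed.

Lemma ml_map_le (f : car A -> car A) l x : In x l -> le (ml (map f l)) (f x).
Proof. intros h. apply meetl_le; [exact Hsl|]. apply in_map, h. Qed.

Lemma mts_neg p L : le (ml (map (fun m => m ⇒ p) (mts p L))) p.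
Proof.
  induction L as [|l L IH]; simpl.
  - rewrite top_imp. apply lb1.
  - eapply ltr; [|exact IH]. apply (le_meetl A Hsl Htm).
    intros x hx. apply in_map_iff in hx as [m [<- hm]].
    rewrite map_app, meetl_app by assumption. rewrite !map_map.
    eapply ltr; [apply mmono; [apply (ml_map_le (fun x => (l ∧ x) ⇒ p) _ m hm)|apply (ml_map_le (fun x => ((l ⇒ p) ∧ x) ⇒ p) _ m hm)]|].
    simpl. apply resL.
    eapply ltr; [|apply (mp (l ⇒ p) p)]. apply glb.
    + apply resL. eapply ltr; [|apply (mp (l ∧ m))]. apply glb.
      * apply glb; [apply lb2|eapply ltr; [apply lb1|apply lb2]].
      * eapply ltr; [apply lb1|eapply ltr; [apply lb1|apply lb1]].
    + apply resL. eapply ltr; [|apply (mp ((l ⇒ p) ∧ m))]. apply glb.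
      * apply glb; [apply lb2|eapply ltr; [apply lb1|apply lb2]].
      * eapply ltr; [apply lb1|eapply ltr; [apply lb1|apply lb2]].
Qed.

Lemma mmp a b c : le a b -> le (a ∧ (b ⇒ c)) c.
Proof. intros h. eapply ltr; [apply mmono; [exact h|apply lrf]|apply mp]. Qed.
Lemma mmp' a b c : le a (b ⇒ c) -> le (a ∧ b) c.
Proof. intros h. eapply ltr; [apply mmono; [exact h|apply lrf]|]. rewrite (mC A Hsl). apply mp. Qed.

Lemma dicho p G C (hC : forall x, SG G x -> In (p ⇒ x) C) u (hu : SG G u) m
  (hm : In m (mts p (G ++ C))) : le (m ∧ (u ⇒ p)) p \/ le (m ∧ u) p.
Proof.
  induction hu as [g hg| |x y hx IHx hy IHy|x y hx IHx hy IHy].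
  - destruct (mts_lit p _ m hm g (in_or_app _ _ _ (or_introl hg))) as [h|h].
    + left. apply mmp, h.
    + right. apply mmp', h.
  - left. rewrite top_imp. apply lb2.
  - destruct IHx as [hx'|hx']; [destruct IHy as [hy'|hy']|].
    + left.
      assert (e : le ((m ∧ ((x ∧ y) ⇒ p)) ∧ x) (y ⇒ p)).
      { apply resL. rewrite <- (mA A Hsl). eapply ltr; [|apply (mp (x ∧ y) p)].
        apply glb; [apply glb; [eapply ltr; [apply lb2|apply lb1]|eapply ltr; [apply lb2|apply lb2]]|].
        eapply ltr; [apply lb1|apply lb2]. }
      assert (e2 : le ((m ∧ ((x ∧ y) ⇒ p)) ∧ x) (m ∧ (y ⇒ p))).
      { apply glb; [eapply ltr; [apply lb1|apply lb1]|exact e]. }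
      assert (e3 : le (m ∧ ((x ∧ y) ⇒ p)) (x ⇒ p)) by (apply resL; eapply ltr; [exact e2|exact hy']).
      eapply ltr; [apply glb; [apply lb1|exact e3]|exact hx'].
    + right. eapply ltr; [|exact hy']. apply mmono; [apply lrf|apply lb2].
    + right. eapply ltr; [|exact hx']. apply mmono; [apply lrf|apply lb1].
  - destruct IHy as [hy'|hy'].
    + left. eapply ltr; [|exact hy']. apply mmono; [apply lrf|]. apply imp_anti, le_imp.
    + destruct IHx as [hx'|hx'].
      * right.
        assert (e : le (m ∧ (x ⇒ y)) (x ⇒ p)).
        { apply resL. eapply ltr; [|exact hy']. apply glb; [eapply ltr; [apply lb1|apply lb1]|].
          eapply ltr; [apply mmono; [apply lb2|apply lrf]|]. rewrite (mC A Hsl). apply mp. }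
        eapply ltr; [apply glb; [apply lb1|exact e]|exact hx'].
      * assert (hc : In (p ⇒ (x ⇒ y)) (G ++ C)) by (apply in_or_app; right; apply hC, SG_imp; assumption).
        destruct (mts_lit p _ m hm _ hc) as [h|h].
        -- left. apply mmp. apply resL. eapply ltr; [|apply (mp x y)]. apply glb; [apply lb2|].
           eapply ltr; [|apply (mmp' _ _ _ h)]. apply glb; [apply lb1|exact hx'].
        -- right. eapply ltr; [apply mmono; [exact h|apply le_imp]|]. rewrite (mC A Hsl). apply mp.
Qed.

Lemma Nform p M u (hd : forall m, In m M -> le (m ∧ (u ⇒ p)) p \/ le (m ∧ u) p)
  (hneg : le (ml (map (fun m => m ⇒ p) M)) p) :
  u ⇒ p = ml (map (fun m => m ⇒ p) (filter (fun m => bdec (le (m ∧ (u ⇒ p)) p)) M)).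
Proof.
  apply asy.
  - apply (le_meetl A Hsl Htm). intros x hx. apply in_map_iff in hx as [m [<- hm]].
    apply filter_In in hm as [hm hb]. apply (proj1 (bdec_iff _)) in hb.
    apply resL. rewrite (mC A Hsl). exact hb.
  - apply resL. eapply ltr; [|exact hneg]. apply (le_meetl A Hsl Htm).
    intros x hx. apply in_map_iff in hx as [m [<- hm]].
    destruct (classic (le (m ∧ (u ⇒ p)) p)) as [hP|hP].
    + eapply ltr; [apply lb1|]. apply (ml_map_le (fun m => m ⇒ p)). apply filter_In. split; [exact hm|].
      apply (proj2 (bdec_iff _)); exact hP.
    + destruct (hd m hm) as [h|h]; [contradiction|].
      eapply ltr; [apply lb2|]. apply resL. rewrite (mC A Hsl). exact h.
Qed.

Lemma SG_phi p l1 l2 x : SG (l1 ++ p :: l2) x -> SG (map (imp A p) (l1 ++ l2)) (p ⇒ x).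
Proof.
  induction 1 as [g hg| |x y hx IHx hy IHy|x y hx IHx hy IHy].
  - apply in_app_or in hg as [hg|[<-|hg]].
    + apply SG_gen, in_map, in_or_app; left; exact hg.
    + rewrite imp_self. apply SG_top.
    + apply SG_gen, in_map, in_or_app; right; exact hg.
  - rewrite imp_top. apply SG_top.
  - rewrite imp_meet. apply SG_meet; assumption.
  - rewrite phi_imp. apply SG_imp; assumption.
Qed.

Lemma SG_cover n : forall G, length G < n -> exists E, forall x, SG G x -> In x E.
Proof.
  induction n as [|n IH]; intros G hlen; [inversion hlen|].
  assert (Hp : forall p, In p G -> exists W, forall w, (exists u, SG G u /\ w = u ⇒ p) -> In w W).
  { intros p hp. destruct (in_split p G hp) as (l1 & l2 & eG).
    destruct (IH (map (imp A p) (l1 ++ l2))) as [C HC].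
    { rewrite eG in hlen. rewrite length_map. rewrite length_app in *. simpl in hlen. lia. }
    exists (map (fun X => ml (map (fun m => m ⇒ p) X)) (sublists (mts p (G ++ C)))).
    intros w [u [hu ->]].
    assert (hC : forall x, SG G x -> In (p ⇒ x) C) by (intros x hx; apply HC; rewrite eG in hx; apply SG_phi, hx).
    rewrite (Nform p (mts p (G ++ C)) u (fun m hm => dicho p G C hC u hu m hm) (mts_neg p _)).
    apply (in_map (fun X => ml (map (fun m => m ⇒ p) X))), filter_sublists. }
  destruct (collect G _ Hp) as [W HW].
  exists (map ml (sublists W)). intros x hx.
  destruct (SG_nf G x hx) as [X [-> HX]].
  rewrite (meetl_same A Hsl Htm X (filter (fun t => bdec (In t X)) W)).
  - apply (in_map ml), filter_sublists.
  - intros t. rewrite filter_In, bdec_iff. split; [|tauto]. intros ht. split; [|exact ht].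
    destruct (HX t ht) as [u [p [hu [hp ->]]]]. eapply HW; [exact hp|]. exists u; split; auto.
Qed.
End ISLfin.

Section ISLinst.
Variable A : alg.
Hypothesis HI : is_ISL A.
Let Hsl : is_semilattice A := proj1 HI.
Let Htm : top_max A := proj1 (proj2 HI).
Let Hres : residuated A := proj2 (proj2 HI).
Variable G : list (car A).

Definition EG : list (car A) :=
  proj1_sig (constructive_indefinite_description _ (SG_cover A HI (S (length G)) G (PeanoNat.Nat.lt_succ_diag_r _))).
Lemma EG_spec x : SG A G x -> In x EG.
Proof. unfold EG. destruct (constructive_indefinite_description _ _) as [E HE]. apply HE. Qed.

Definition jnG (a b : car A) : car A :=
  meetl A (filter (fun e => bdec (SG A G e /\ leA A a e /\ leA A b e)) EG).

Lemma jnG_S a b : SG A G (jnG a b).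
Proof.
  apply SG_meetl. intros x hx. apply filter_In in hx as [_ hx]. apply (proj1 (bdec_iff _)) in hx. apply hx.
Qed.

Lemma jnG_lub x y z : SG A G x -> SG A G y -> SG A G z ->
  (leA A (jnG x y) z <-> leA A x z /\ leA A y z).
Proof.
  intros hx hy hz. split.
  - intros h.
    assert (ub : leA A x (jnG x y) /\ leA A y (jnG x y)).
    { split; apply (le_meetl A Hsl Htm); intros e he; apply filter_In in he as [_ he];
      apply (proj1 (bdec_iff _)) in he; apply he. }
    split; eapply (le_trans A Hsl); [apply ub|exact h|apply ub|exact h].
  - intros [a b]. apply (meetl_le A Hsl). apply filter_In. split; [apply EG_spec, hz|].
    apply (proj2 (bdec_iff _)). auto.
Qed.

Definition ISLH : alg :=
  SubH A (SG A G) jnG (imp A) (meetl A G)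
    (SG_top A G) (SG_meet A G) (fun x y _ _ => jnG_S x y) (SG_imp A G)
    (SG_meetl A G G (fun x h => SG_gen A G x h)).

Lemma ISLH_heyting : heyting ISLH.
Proof.
  apply SubH_heyting; try assumption.
  - intros; apply jnG_lub; assumption.
  - intros; apply Hres.
  - intros; apply SG_bot; assumption.
Qed.

Lemma ISLH_emb_ISL : embedding ISL (reduct ISLH) A (@proj1_sig _ _).
Proof.
  repeat split; try discriminate.
  intros x y e; apply sig_ext; exact e.
Qed.
End ISLinst.

(* ---------- PDL local finiteness ---------- *)
Section PDLfin.
Variable A : alg.
Hypothesis HP : is_PDL A.
Let Hl : is_lattice A := proj1 HP.
Let Hsl : is_semilattice A := proj1 Hl.
Let Hd : is_distributive A := proj1 (proj2 HP).
Let Hbm : bot_min A := proj1 (proj2 (proj2 HP)).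
Let Htm : top_max A := proj1 (proj2 (proj2 (proj2 HP))).
Let Hpc : pseudocomplemented A := proj2 (proj2 (proj2 (proj2 HP))).
Notation "x ∧ y" := (meet A x y) (at level 40, left associativity).
Notation "x ∨ y" := (join A x y) (at level 50, left associativity).
Notation "¬ x" := (neg A x) (at level 35).
Notation le := (leA A).
Notation T := (top A).
Notation Z := (bot A).
Notation ml := (meetl A).

Let ltr x y z : le x y -> le y z -> le x z := le_trans A Hsl x y z.
Let lrf x : le x x := le_refl A Hsl x.
Let lb1 x y : le (x ∧ y) x := meet_lb1 A Hsl x y.
Let lb2 x y : le (x ∧ y) y := meet_lb2 A Hsl x y.
Let glb x y z : le z x -> le z y -> le z (x ∧ y) := meet_glb A Hsl x y z.
Let asy x y : le x y -> le y x -> x = y := le_antisym A Hsl x y.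
Let mmono x y x' y' : le x x' -> le y y' -> le (x ∧ y) (x' ∧ y') := meet_mono A Hsl x y x' y'.

Lemma le0 x : le x Z -> x = Z.
Proof. intros h. apply asy; [exact h|apply Hbm]. Qed.
Lemma pcL c a : le (c ∧ a) Z -> le c (¬ a).
Proof. intros h. apply Hpc. apply le0, h. Qed.
Lemma pcR c a : le c (¬ a) -> le (c ∧ a) Z.
Proof. intros h. apply Hpc in h. rewrite h. apply lrf. Qed.
Lemma nmp a : le (a ∧ ¬ a) Z.
Proof. rewrite (mC A Hsl). apply pcR, lrf. Qed.
Lemma nanti a b : le a b -> le (¬ b) (¬ a).
Proof. intros h. apply pcL. eapply ltr; [apply mmono; [apply lrf|exact h]|]. rewrite (mC A Hsl). apply nmp. Qed.
Lemma pjub1 x y : le x (x ∨ y).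
Proof. apply (proj1 (proj1 (lat_lub A Hl x y (x ∨ y)) (lrf _))). Qed.
Lemma pjub2 x y : le y (x ∨ y).
Proof. apply (proj2 (proj1 (lat_lub A Hl x y (x ∨ y)) (lrf _))). Qed.
Lemma jlub x y z : le x z -> le y z -> le (x ∨ y) z.
Proof. intros; apply (lat_lub A Hl); auto. Qed.

Definition joinl (l : list (car A)) : car A := fold_right (join A) Z l.
Lemma joinl_ge l x : In x l -> le x (joinl l).
Proof.
  induction l as [|a l IH]; simpl; [tauto|]. intros [<-|h]; [apply pjub1|].
  eapply ltr; [apply IH, h|apply pjub2].
Qed.
Lemma joinl_lub l c : (forall x, In x l -> le x c) -> le (joinl l) c.
Proof.
  induction l as [|a l IH]; simpl; intros h; [apply Hbm|].
  apply jlub; [apply h; left; reflexivity|apply IH; intros; apply h; right; assumption].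
Qed.
Lemma joinl_app l1 l2 : joinl (l1 ++ l2) = joinl l1 ∨ joinl l2.
Proof.
  apply asy.
  - apply joinl_lub. intros x hx. apply in_app_or in hx as [hx|hx].
    + eapply ltr; [apply joinl_ge, hx|apply pjub1].
    + eapply ltr; [apply joinl_ge, hx|apply pjub2].
  - apply jlub; apply joinl_lub; intros x hx; apply joinl_ge, in_or_app; auto.
Qed.
Lemma joinl_same l1 l2 : (forall x, In x l1 <-> In x l2) -> joinl l1 = joinl l2.
Proof.
  intros h. apply asy; apply joinl_lub; intros x hx; apply joinl_ge, h; assumption.
Qed.
Lemma meet_joinl c l : c ∧ joinl l = joinl (map (meet A c) l).
Proof.
  induction l as [|a l IH]; simpl.
  - apply le0. apply lb2.
  - rewrite Hd, IH. reflexivity.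
Qed.

Inductive SP (G : list (car A)) : car A -> Prop :=
| SP_gen g : In g G -> SP G g
| SP_bot : SP G Z
| SP_top : SP G T
| SP_meet x y : SP G x -> SP G y -> SP G (x ∧ y)
| SP_join x y : SP G x -> SP G y -> SP G (x ∨ y)
| SP_neg x : SP G x -> SP G (¬ x).

Lemma SP_joinl G l : (forall x, In x l -> SP G x) -> SP G (joinl l).
Proof.
  induction l as [|a l IH]; simpl; intros h; [apply SP_bot|].
  apply SP_join; [apply h; left; reflexivity|apply IH; intros; apply h; right; assumption].
Qed.

Fixpoint mtsP (L : list (car A)) : list (car A) :=
  match L with
  | [] => [T]
  | l :: L' => map (meet A l) (mtsP L') ++ map (meet A (¬ l)) (mtsP L')
  end.

Lemma mtsP_lit L m : In m (mtsP L) -> forall l, In l L -> le m l \/ le m (¬ l).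
Proof.
  revert m. induction L as [|a L IH]; simpl; intros m hm l hl; [contradiction|].
  apply in_app_or in hm as [hm|hm]; apply in_map_iff in hm as [m' [<- hm']].
  - destruct hl as [<-|hl]; [left; apply lb1|].
    destruct (IH m' hm' l hl) as [h|h]; [left|right]; eapply ltr; [apply lb2|exact h| apply lb2|exact h].
  - destruct hl as [<-|hl]; [right; apply lb1|].
    destruct (IH m' hm' l hl) as [h|h]; [left|right]; eapply ltr; [apply lb2|exact h| apply lb2|exact h].
Qed.

Lemma mlmap_le (f : car A -> car A) l x : In x l -> le (ml (map f l)) (f x).
Proof. intros h. apply meetl_le; [exact Hsl|]. apply in_map, h. Qed.

Lemma mtsP_neg L : le (ml (map (neg A) (mtsP L))) Z.
Proof.
  induction L as [|l L IH]; simpl.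
  - eapply ltr; [apply lb1|]. eapply ltr; [|apply (nmp T)].
    apply glb; [apply Htm|apply lrf].
  - eapply ltr; [|exact IH]. apply (le_meetl A Hsl Htm).
    intros x hx. apply in_map_iff in hx as [m [<- hm]].
    rewrite map_app, (meetl_app A Hsl Htm). rewrite !map_map.
    eapply ltr; [apply mmono; [apply (mlmap_le (fun x => ¬ (l ∧ x)) _ m hm)|apply (mlmap_le (fun x => ¬ ((¬ l) ∧ x)) _ m hm)]|].
    simpl. apply pcL.
    eapply ltr; [|apply (nmp (¬ l))]. apply glb.
    + apply pcL. eapply ltr; [|apply (nmp (l ∧ m))]. apply glb.
      * apply glb; [apply lb2|eapply ltr; [apply lb1|apply lb2]].
      * eapply ltr; [apply lb1|eapply ltr; [apply lb1|apply lb1]].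
    + apply pcL. eapply ltr; [|apply (nmp ((¬ l) ∧ m))]. apply glb.
      * apply glb; [apply lb2|eapply ltr; [apply lb1|apply lb2]].
      * eapply ltr; [apply lb1|eapply ltr; [apply lb1|apply lb2]].
Qed.

Lemma dichoP G u (hu : SP G u) m (hm : In m (mtsP G)) : le m u \/ le (m ∧ u) Z.
Proof.
  induction hu as [g hg| | |x y hx IHx hy IHy|x y hx IHx hy IHy|x hx IHx].
  - destruct (mtsP_lit G m hm g hg) as [h|h]; [left; exact h|right; apply pcR, h].
  - right. apply lb2.
  - left. apply Htm.
  - destruct IHx as [a|a]; [destruct IHy as [b|b]|].
    + left. apply glb; assumption.
    + right. eapply ltr; [|exact b]. apply mmono; [apply lrf|apply lb2].
    + right. eapply ltr; [|exact a]. apply mmono; [apply lrf|apply lb1].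
  - destruct IHx as [a|a]; [left; eapply ltr; [exact a|apply pjub1]|].
    destruct IHy as [b|b]; [left; eapply ltr; [exact b|apply pjub2]|].
    right. rewrite Hd. apply jlub; assumption.
  - destruct IHx as [a|a].
    + right. eapply ltr; [apply mmono; [exact a|apply lrf]|apply nmp].
    + left. apply pcL, a.
Qed.

Lemma NformP G u (hu : SP G u) :
  ¬ u = ml (map (neg A) (filter (fun m => bdec (le m u)) (mtsP G))).
Proof.
  apply asy.
  - apply (le_meetl A Hsl Htm). intros x hx. apply in_map_iff in hx as [m [<- hm]].
    apply filter_In in hm as [hm hb]. apply (proj1 (bdec_iff _)) in hb. apply nanti, hb.
  - apply pcL. eapply ltr; [|apply (mtsP_neg G)]. apply (le_meetl A Hsl Htm).
    intros x hx. apply in_map_iff in hx as [m [<- hm]].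
    destruct (classic (le m u)) as [hP|hP].
    + eapply ltr; [apply lb1|]. apply (mlmap_le (neg A)). apply filter_In. split; [exact hm|].
      apply (proj2 (bdec_iff _)); exact hP.
    + destruct (dichoP G u hu m hm) as [h|h]; [contradiction|].
      eapply ltr; [apply lb2|]. apply pcL. rewrite (mC A Hsl). exact h.
Qed.

Definition NlP G := map (fun X => ml (map (neg A) X)) (sublists (mtsP G)).
Definition AtP G := G ++ NlP G.

Lemma joinl_prod (Ys1 Ys2 : list (list (car A))) :
  joinl (map ml Ys1) ∧ joinl (map ml Ys2) =
  joinl (map ml (flat_map (fun Y1 => map (app Y1) Ys2) Ys1)).
Proof.
  induction Ys1 as [|Y Ys IH]; simpl.
  - apply le0. apply lb1.
  - rewrite map_app, joinl_app, <- IH. rewrite (mC A Hsl), Hd.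
    rewrite (mC A Hsl _ (joinl (map ml Ys))). f_equal.
    rewrite (mC A Hsl), meet_joinl, !map_map. f_equal. apply map_ext. intros Y2.
    symmetry. apply (meetl_app A Hsl Htm).
Qed.

Lemma SP_nf G x : SP G x -> exists Ys, x = joinl (map ml Ys) /\
  forall Y a, In Y Ys -> In a Y -> In a (AtP G).
Proof.
  induction 1 as [g hg| | |x y hx IHx hy IHy|x y hx IHx hy IHy|x hx IHx].
  - exists [[g]]. split.
    + simpl. rewrite (Htm g). apply asy; [apply pjub1|]. apply jlub; [apply lrf|apply Hbm].
    + intros Y a [<-|[]] [<-|[]]. apply in_or_app; left; exact hg.
  - exists []. split; [reflexivity|intros Y a []].
  - exists [[]]. split.
    + simpl. apply asy; [apply pjub1|]. apply jlub; [apply lrf|apply Hbm].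
    + intros Y a [<-|[]] [].
  - destruct IHx as [Y1 [-> H1]], IHy as [Y2 [-> H2]].
    exists (flat_map (fun Y => map (app Y) Y2) Y1). split; [apply joinl_prod|].
    intros Y a hY ha. apply in_flat_map in hY as [Ya [hYa hY]]. apply in_map_iff in hY as [Yb [<- hYb]].
    apply in_app_or in ha as [ha|ha]; [eapply H1|eapply H2]; eassumption.
  - destruct IHx as [Y1 [-> H1]], IHy as [Y2 [-> H2]].
    exists (Y1 ++ Y2). split; [rewrite map_app, joinl_app; reflexivity|].
    intros Y a hY ha. apply in_app_or in hY as [hY|hY]; [eapply H1|eapply H2]; eassumption.
  - exists [[¬ x]]. split.
    + simpl. rewrite (Htm (¬ x)). apply asy; [apply pjub1|]. apply jlub; [apply lrf|apply Hbm].
    + intros Y a [<-|[]] [<-|[]]. apply in_or_app; right. unfold NlP.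
      rewrite (NformP G x hx). apply (in_map (fun X => ml (map (neg A) X))), filter_sublists.
Qed.

Lemma SP_cover G : exists E, forall x, SP G x -> In x E.
Proof.
  pose (Mt := map ml (sublists (AtP G))).
  exists (map joinl (sublists Mt)). intros x hx.
  destruct (SP_nf G x hx) as [Ys [-> HY]].
  assert (hM : forall y, In y (map ml Ys) -> In y Mt).
  { intros y hy. apply in_map_iff in hy as [Y [<- hY]].
    rewrite (meetl_same A Hsl Htm Y (filter (fun t => bdec (In t Y)) (AtP G))).
    - apply (in_map ml), filter_sublists.
    - intros t. rewrite filter_In, bdec_iff. split; [|tauto]. intros ht; split; [eapply HY; eassumption|exact ht]. }
  rewrite (joinl_same (map ml Ys) (filter (fun t => bdec (In t (map ml Ys))) Mt)).
  - apply (in_map joinl), filter_sublists.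
  - intros t. rewrite filter_In, bdec_iff. split; [|tauto]. intros ht; split; [apply hM, ht|exact ht].
Qed.

Variable G : list (car A).
Definition EP : list (car A) := proj1_sig (constructive_indefinite_description _ (SP_cover G)).
Lemma EP_spec x : SP G x -> In x EP.
Proof. unfold EP. destruct (constructive_indefinite_description _ _) as [E HE]. apply HE. Qed.

Definition imP (a b : car A) : car A :=
  joinl (filter (fun z => bdec (SP G z /\ le (z ∧ a) b)) EP).

Lemma imP_S a b : SP G (imP a b).
Proof.
  apply SP_joinl. intros x hx. apply filter_In in hx as [_ hx]. apply (proj1 (bdec_iff _)) in hx. apply hx.
Qed.

Lemma imP_res a c d : SP G a -> SP G c -> SP G d -> (le (c ∧ a) d <-> le c (imP a d)).
Proof.
  intros ha hc hd. split.
  - intros h. apply joinl_ge. apply filter_In. split; [apply EP_spec, hc|]. apply (proj2 (bdec_iff _)); auto.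
  - intros h. eapply ltr; [apply mmono; [exact h|apply lrf]|].
    unfold imP. rewrite (mC A Hsl), meet_joinl. apply joinl_lub. intros x hx. apply in_map_iff in hx as [z [<- hz]].
    apply filter_In in hz as [_ hz]. apply (proj1 (bdec_iff _)) in hz. rewrite (mC A Hsl). apply hz.
Qed.

Definition PDLH : alg :=
  SubH A (SP G) (join A) imP Z
    (SP_top G) (SP_meet G) (SP_join G) (fun x y _ _ => imP_S x y) (SP_bot G).

Lemma PDLH_heyting : heyting PDLH.
Proof.
  apply SubH_heyting; try assumption.
  - intros; apply lat_lub; assumption.
  - intros; apply imP_res; assumption.
  - intros; apply Hbm.
Qed.

Lemma PDLH_emb : embedding PDL (reduct PDLH) A (@proj1_sig _ _).
Proof.
  repeat split; try discriminate.
  - intros x y e; apply sig_ext; exact e.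
  - intros _ [x hx]. simpl. apply asy.
    + apply pcL. apply (imP_res x (imP x Z) Z hx (imP_S _ _) (SP_bot G)). apply lrf.
    + apply (imP_res x (¬ x) Z hx (SP_neg G x hx) (SP_bot G)). rewrite (mC A Hsl). apply nmp.
Qed.
End PDLfin.


Theorem theorem2p7 (K : variety) (A : alg) (HA_in : in_variety K A) :
  exists (B : alg) (f : car A -> car (reduct B)),
    heyting B /\ embedding K A (reduct B) f /\ in_univ_class K A (reduct B).
Proof.
  destruct (UFm.ultra_exists (list (car A)) (car A) (fun x F => In x F)) as [U (Uup & Ucap & Unot0 & Uult & UE)].
  { intros js. exists js. auto. }
  destruct K; simpl in HA_in.
  -
    apply (ultra_main (list (car A)) U Uup Ucap Unot0 Uult ISL A (fun F => ISLH A HA_in F)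
             (fun F => ISLH_heyting A HA_in F) (fun F => @proj1_sig _ _) (fun F => ISLH_emb_ISL A HA_in F)).
    intros x. refine (Uup _ _ _ (UE x)). intros F h. exists (exist _ x (SG_gen A F x h)). reflexivity.
  -
    destruct HA_in as [HI Hb].
    apply (ultra_main (list (car A)) U Uup Ucap Unot0 Uult bISL A (fun F => ISLH A HI (bot A :: F))
             (fun F => ISLH_heyting A HI (bot A :: F)) (fun F => @proj1_sig _ _)).
    + intros F. repeat split; try discriminate.
      * intros x y e; apply sig_ext; exact e.
      * intros _. simpl. apply Hb.
    + intros x. refine (Uup _ _ _ (UE x)). intros F h.
      exists (exist _ x (SG_gen A (bot A :: F) x (or_intror h))). reflexivity.
  -
    apply (ultra_main (list (car A)) U Uup Ucap Unot0 Uult PDL A (fun F => PDLH A HA_in F)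
             (fun F => PDLH_heyting A HA_in F) (fun F => @proj1_sig _ _) (fun F => PDLH_emb A HA_in F)).
    intros x. refine (Uup _ _ _ (UE x)). intros F h. exists (exist _ x (SP_gen A F x h)). reflexivity.
  -
    apply (ultra_main (list (car A)) U Uup Ucap Unot0 Uult IL A (fun F => ILH A HA_in F)
             (fun F => ILH_heyting A HA_in F) (fun F => @proj1_sig _ _) (fun F => ILH_emb A HA_in F)).
    intros x. refine (Uup _ _ _ (UE x)). intros F h. apply ILH_cov, h.
  -
    apply (ultra_main (list (car A)) U Uup Ucap Unot0 Uult HA A (fun _ => A)
             (fun _ => HA_in) (fun _ x => x)).
    + intros F. repeat split; try discriminate. intros x y e; exact e.
    + intros x. refine (Uup _ _ _ (UE x)). intros F _. exists x. reflexivity.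
Qed.
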